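(* Let $k\ge 2$ be an integer. Assume that for every integer $d$ with $2\le d\le k$, every $\mathcal{T}\in\mathrm{Sym}(2,d)$ has a symmetric best rank one approximation. Then for every integer $n\ge 3$ and every integer $d$ with $2\le d\le k$, every $\mathcal{T}\in\mathrm{Sym}(n,d)$ has a symmetric best rank one approximation.
   Context: $\mathrm{Sym}(n,d)$ is the space of real tensors $[t_{i_1,\ldots,i_d}]_{i_1,\ldots,i_d=1}^n$ invariant under all permutations of indices. Norm $\|\mathcal{T}\|=\sqrt{\sum t_{i_1,\ldots,i_d}^2}$; $\mathrm{S}^{n-1}$ is the Euclidean unit sphere in $\mathbb{R}^n$. A best rank one approximation of $\mathcal{T}$ is a tensor $a\,\mathbf{u}_1\otimes\cdots\otimes\mathbf{u}_d$ ($a\in\mathbb{R}$, $\mathbf{u}_j\in\mathrm{S}^{n-1}$) minimizing $\|\mathcal{T}-s\,\mathbf{x}_1\otimes\cdots\otimes\mathbf{x}_d\|$ over $s\in\mathbb{R}$, $\mathbf{x}_j\in\mathrm{S}^{n-1}$; it is symmetric if it is of the form $b\,\mathbf{u}\otimes\cdots\otimes\mathbf{u}$. *)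

(* Defs.v *)
From HB Require Import structures.
From mathcomp Require Import all_boot all_order all_algebra all_fingroup.
From mathcomp Require Import reals.
Set Implicit Arguments. Unset Strict Implicit. Unset Printing Implicit Defensive.
Import Order.TTheory GRing.Theory Num.Theory.
Local Open Scope ring_scope.

Definition midx (n d : nat) := {ffun 'I_d -> 'I_n}.

Definition tensor (R : realType) (n d : nat) := midx n d -> R.

Definition symmetric_tensor (R : realType) (n d : nat) (T : tensor R n d) : Prop :=
  forall (s : 'S_d) (i : midx n d), T [ffun j => i (s j)] = T i.

Definition tnorm (R : realType) (n d : nat) (T : tensor R n d) : R :=
  Num.sqrt (\sum_(i : midx n d) T i ^+ 2).

Definition unit_vec (R : realType) (n : nat) (u : 'I_n -> R) : Prop :=
  \sum_(i < n) u i ^+ 2 = 1.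

Definition rank_one (R : realType) (n d : nat) (s : R) (x : 'I_d -> 'I_n -> R)
  : tensor R n d :=
  fun i => s * \prod_(j < d) x j (i j).

Definition tsub (R : realType) (n d : nat) (T U : tensor R n d) : tensor R n d :=
  fun i => T i - U i.

Definition best_rank_one (R : realType) (n d : nat) (T : tensor R n d)
  (a : R) (u : 'I_d -> 'I_n -> R) : Prop :=
  (forall j, unit_vec (u j)) /\
  forall (s : R) (x : 'I_d -> 'I_n -> R), (forall j, unit_vec (x j)) ->
    tnorm (tsub T (rank_one a u)) <= tnorm (tsub T (rank_one s x)).

Definition has_sym_best_rank_one (R : realType) (n d : nat) (T : tensor R n d) : Prop :=
  exists (b : R) (u : 'I_n -> R), best_rank_one T b (fun _ => u).

(* Main.v *)
Require Import Defs.
From mathcomp Require Import all_boot all_order all_algebra reals.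
From HB Require Import structures.
From mathcomp Require Import all_boot all_order all_algebra all_fingroup reals.
From mathcomp Require Import ring lra.
From mathcomp Require Import all_classical all_reals all_analysis.
Set Implicit Arguments. Unset Strict Implicit. Unset Printing Implicit Defensive.
Import Order.TTheory GRing.Theory Num.Theory.
Import numFieldNormedType.Exports.
Local Open Scope classical_set_scope.
Local Open Scope ring_scope.

Section Alg.
Variable R : realType.

Definition ftm (n d : nat) (T : tensor R n d) (x : 'I_d -> 'I_n -> R) : R :=
  \sum_(i : midx n d) T i * \prod_(j < d) x j (i j).

Definition tsq (n d : nat) (T : tensor R n d) : R := \sum_(i : midx n d) T i ^+ 2.

Lemma prod_sq_sum (n d : nat) (x : 'I_d -> 'I_n -> R) :
  \sum_(i : midx n d) (\prod_(j < d) x j (i j)) ^+ 2 =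
  \prod_(j < d) \sum_(k < n) x j k ^+ 2.
Proof.
rewrite bigA_distr_bigA /=; apply: eq_bigr => i _.
by rewrite -prodrXl.
Qed.

Lemma dist2 (n d : nat) (T : tensor R n d) s (x : 'I_d -> 'I_n -> R) :
  (forall j, unit_vec (x j)) ->
  \sum_(i : midx n d) (tsub T (rank_one s x) i) ^+ 2 =
  tsq T - 2 * s * ftm T x + s ^+ 2.
Proof.
move=> ux.
have P1 : \prod_(j < d) \sum_(k < n) x j k ^+ 2 = 1.
  by rewrite big1 // => j _; apply: ux.
rewrite /tsub /rank_one /tsq /ftm.
transitivity (\sum_(i : midx n d) (T i ^+ 2 - 2 * s * (T i * \prod_(j < d) x j (i j))
   + s ^+ 2 * (\prod_(j < d) x j (i j)) ^+ 2)).
  by apply: eq_bigr => i _; ring.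
rewrite big_split /= sumrB -mulr_sumr -mulr_sumr prod_sq_sum P1 mulr1.
done.
Qed.


Lemma tsub_ge0 (n d : nat) (T : tensor R n d) s x :
  0 <= \sum_(i : midx n d) (tsub T (rank_one s x) i) ^+ 2.
Proof. by apply: sumr_ge0 => i _; rewrite sqr_ge0. Qed.

Lemma best_max (n d : nat) (T : tensor R n d) b (Y : 'I_d -> 'I_n -> R) :
  best_rank_one T b Y ->
  forall Z : 'I_d -> 'I_n -> R, (forall j, unit_vec (Z j)) ->
  ftm T Z ^+ 2 <= ftm T Y ^+ 2.
Proof.
move=> [uY hb] Z uZ.
have := hb (ftm T Z) Z uZ.
rewrite /tnorm ler_sqrt ?tsub_ge0 // !dist2 //.
move=> h.
have h2 : 0 <= (b - ftm T Y) ^+ 2 by rewrite sqr_ge0.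
nra.
Qed.

Lemma max_best (n d : nat) (T : tensor R n d) (u : 'I_n -> R) :
  unit_vec u ->
  (forall x : 'I_d -> 'I_n -> R, (forall j, unit_vec (x j)) ->
    ftm T x ^+ 2 <= ftm T (fun _ => u) ^+ 2) ->
  has_sym_best_rank_one T.
Proof.
move=> uu hm; exists (ftm T (fun _ => u)), u; split => // s x ux.
rewrite /tnorm ler_sqrt ?tsub_ge0 // !dist2 //.
have := hm x ux.
have h2 : 0 <= (s - ftm T x) ^+ 2 by rewrite sqr_ge0.
nra.
Qed.


Lemma ftm_perm (n d : nat) (T : tensor R n d) (s : 'S_d) x :
  symmetric_tensor T -> ftm T (fun j => x (s j)) = ftm T x.
Proof.
move=> sT; rewrite /ftm.
pose h (i : midx n d) : midx n d := [ffun j => i ((s^-1)%g j)].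
have hinj : injective h.
  move=> i1 i2 /ffunP e; apply/ffunP => j.
  by have := e (s j); rewrite !ffunE permK.
rewrite [RHS](reindex_inj hinj); apply: eq_bigr => i _.
congr (_ * _).
  rewrite -(sT s (h i)); congr (T _); apply/ffunP => j.
  by rewrite !ffunE permK.
rewrite (reindex_inj (@perm_inj _ (s^-1)%g)) /=.
by apply: eq_bigr => j _; rewrite permKV ffunE.
Qed.


Section Restr.
Variables (n d m : nat) (le : (m.+1 <= d)%N) (e : 'I_2 -> 'I_n -> R)
  (x : 'I_d -> 'I_n -> R) (T : tensor R n d).

Definition Gm (i2 : midx 2 m.+1) : 'I_d -> 'I_n -> R :=
  fun j => if (j < m.+1)%N then e (i2 (inord j)) else x j.
Definition Tr : tensor R 2 m.+1 := fun i2 => ftm T (Gm i2).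
Definition phi (y : 'I_2 -> R) : 'I_n -> R := fun k => \sum_(a < 2) y a * e a k.

Lemma ftm_restr Y :
  ftm Tr Y = ftm T (fun j => if (j < m.+1)%N then phi (Y (inord j)) else x j).
Proof.
rewrite /ftm /Tr /ftm.
under eq_bigr do rewrite mulr_suml.
rewrite exchange_big /=; apply: eq_bigr => i _.
under eq_bigr do rewrite -mulrA.
rewrite -mulr_sumr; congr (_ * _).
rewrite [in RHS](bigID (fun j : 'I_d => (j < m.+1)%N)) /=.
under eq_bigr => i2 _ do rewrite (bigID (fun j : 'I_d => (j < m.+1)%N)) /=.
have E2 : forall i2, \prod_(j < d | ~~ (j < m.+1)%N) Gm i2 j (i j) =
   \prod_(j < d | ~~ (j < m.+1)%N) (if (j < m.+1)%N then phi (Y (inord j)) else x j) (i j).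
  by move=> i2; apply: eq_bigr => j /negbTE hj; rewrite /Gm hj.
under eq_bigr => i2 _ do rewrite E2 -mulrA [_ * (_ * _)]mulrC -mulrA.
rewrite -mulr_sumr [RHS]mulrC; congr (_ * _).
rewrite (big_ord_narrow le).
under eq_bigr => i2 _ do rewrite (big_ord_narrow le).
have W1 : forall j : 'I_m.+1, (widen_ord le j < m.+1)%N by move=> j; exact: (ltn_ord j).
have W2 : forall j : 'I_m.+1, inord (widen_ord le j) = j by move=> j; apply: val_inj; rewrite /= inordK.
have E3 : forall i2 : midx 2 m.+1, \prod_(j < m.+1) Gm i2 (widen_ord le j) (i (widen_ord le j)) = \prod_(j<m.+1) e (i2 j) (i (widen_ord le j)).
  by move=> i2; apply: eq_bigr => j _; rewrite /Gm W1 W2.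
under eq_bigr => i2 _ do rewrite E3.
have E4 : \prod_(j < m.+1) (if (widen_ord le j < m.+1)%N then phi (Y (inord (widen_ord le j))) else x (widen_ord le j)) (i (widen_ord le j)) = \prod_(j<m.+1) phi (Y j) (i (widen_ord le j)).
  by apply: eq_bigr => j _; rewrite W1 W2.
rewrite E4.
rewrite /phi bigA_distr_bigA /=; apply: eq_bigr => i2 _.
by rewrite -big_split /=.
Qed.

Lemma Tr_sym : symmetric_tensor T -> symmetric_tensor Tr.
Proof.
move=> sT s i2.
have W1 : forall j : 'I_m.+1, (widen_ord le j < m.+1)%N by move=> j; exact: (ltn_ord j).
have W2 : forall j : 'I_m.+1, inord (widen_ord le j) = j.
  by move=> j; apply: val_inj; rewrite /= inordK.
pose sf (j : 'I_d) : 'I_d := if (j < m.+1)%N then widen_ord le (s (inord j)) else j.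
have sinj : injective sf.
  move=> j1 j2; rewrite /sf.
  case: (ltnP j1 m.+1) => h1; case: (ltnP j2 m.+1) => h2.
  - move/(congr1 val) => /= /val_inj /perm_inj /(congr1 val).
    by rewrite /= !inordK // => /val_inj.
  - by move=> E; move: h2; rewrite -E /= leqNgt ltn_ord.
  - by move=> E; move: h1; rewrite E /= leqNgt ltn_ord.
  - by [].
pose sg := perm sinj.
rewrite /Tr -(@ftm_perm n d T sg (Gm i2) sT) /ftm; apply: eq_bigr => i _.
congr (_ * _); apply: eq_bigr => j _.
rewrite /Gm permE /sf; case: ifP => hj; last by rewrite hj.
by rewrite W1 W2 ffunE.
Qed.

End Restr.

Lemma sum2 (F : 'I_2 -> R) : \sum_(a < 2) F a = F 0 + F 1.
Proof. rewrite big_ord_recl big_ord1; congr (F _ + F _); exact: val_inj. Qed.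

Lemma phi_unit (n : nat) (e : 'I_2 -> 'I_n -> R) (y : 'I_2 -> R) :
  unit_vec (e 0) -> unit_vec (e 1) -> \sum_(k < n) e 0 k * e 1 k = 0 ->
  unit_vec y -> unit_vec (phi e y).
Proof.
rewrite /unit_vec /phi => u0 u1 o uy.
under eq_bigr do rewrite sum2.
rewrite sum2 in uy.
transitivity (y 0 ^+ 2 * \sum_(k < n) e 0 k ^+ 2 + 2 * y 0 * y 1 * \sum_(k < n) e 0 k * e 1 k
   + y 1 ^+ 2 * \sum_(k < n) e 1 k ^+ 2).
  rewrite !mulr_sumr -!big_split /=; apply: eq_bigr => k _; ring.
by rewrite u0 u1 o; lra.
Qed.

Definition dot (n : nat) (a b : 'I_n -> R) := \sum_(k < n) a k * b k.

Lemma gs (n : nat) (w v : 'I_n -> R) : unit_vec w -> unit_vec v ->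
  dot v w ^+ 2 < 1 ->
  exists e : 'I_n -> R, [/\ unit_vec e, dot w e = 0 &
    forall k, v k = dot v w * w k + Num.sqrt (1 - dot v w ^+ 2) * e k].
Proof.
rewrite /unit_vec => uw uv hc.
set c := dot v w.
pose r k := v k - c * w k.
have Hr : \sum_(k < n) r k ^+ 2 = 1 - c ^+ 2.
  transitivity (\sum_(k < n) (v k ^+ 2 - 2 * c * (v k * w k) + c ^+ 2 * w k ^+ 2)).
    by apply: eq_bigr => k _; rewrite /r; ring.
  rewrite big_split /= sumrB -!mulr_sumr uv uw -/(dot v w) -/c; ring.
have q0 : 0 < 1 - c ^+ 2 by rewrite subr_gt0.
set t := Num.sqrt (1 - c ^+ 2).
have t0 : 0 < t by rewrite sqrtr_gt0.
have t2 : t ^+ 2 = 1 - c ^+ 2 by rewrite sqr_sqrtr // ltW.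
have tn0 : t != 0 by rewrite gt_eqF.
exists (fun k => r k / t); split.
- transitivity ((\sum_(k < n) r k ^+ 2) / t ^+ 2).
    by rewrite mulr_suml; apply: eq_bigr => k _; rewrite expr_div_n.
  by rewrite Hr t2 divff // gt_eqF.
- rewrite /dot.
  transitivity ((\sum_(k < n) v k * w k - c * \sum_(k < n) w k ^+ 2) / t).
    rewrite mulr_sumr -sumrB mulr_suml; apply: eq_bigr => k _.
    by rewrite /r; field.
  by rewrite uw mulr1 -/(dot v w) -/c subrr mul0r.
- by move=> k; rewrite /r; field.
Qed.

Lemma decomp (n : nat) (w v : 'I_n -> R) : (2 <= n)%N -> unit_vec w -> unit_vec v ->
  exists (e : 'I_n -> R) (a b : R), [/\ unit_vec e, dot w e = 0, a ^+ 2 + b ^+ 2 = 1 &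
    forall k, v k = a * w k + b * e k].
Proof.
move=> n2 uw uv.
have [hc|hc] := ltP (dot v w ^+ 2) 1.
  have [e [ue o hv]] := gs uw uv hc.
  exists e, (dot v w), (Num.sqrt (1 - dot v w ^+ 2)); split => //.
  by rewrite sqr_sqrtr ?subr_ge0 ?ltW //; ring.
set c := dot v w.
pose r k := v k - c * w k.
have Hr : \sum_(k < n) r k ^+ 2 = 1 - c ^+ 2.
  transitivity (\sum_(k < n) (v k ^+ 2 - 2 * c * (v k * w k) + c ^+ 2 * w k ^+ 2)).
    by apply: eq_bigr => k _; rewrite /r; ring.
  rewrite big_split /= sumrB -!mulr_sumr uv uw -/(dot v w) -/c; ring.
have r0 : forall k, r k = 0.
  have S0 : \sum_(k < n) r k ^+ 2 = 0.
    apply/eqP; rewrite eq_le; apply/andP; split.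
      by rewrite Hr subr_le0.
    by apply: sumr_ge0 => k _; rewrite sqr_ge0.
  move=> k; apply/eqP; rewrite -sqrf_eq0; apply/eqP.
  by move/psumr_eq0P: S0 => -> // i _; rewrite sqr_ge0.
have /existsP[k0 hk0] : [exists k0, w k0 ^+ 2 < 1].
  case: (boolP [exists k0, w k0 ^+ 2 < 1]) => // /existsPn H; exfalso.
  have : (n%:R : R) <= \sum_(k < n) w k ^+ 2.
    rewrite -[n in n%:R](card_ord n) -sumr_const.
    by apply: ler_sum => k _; rewrite leNgt; apply: H.
  rewrite uw; have : (2%:R : R) <= n%:R by rewrite ler_nat.
  lra.
pose v' : 'I_n -> R := fun k => (k == k0)%:R.
have uv' : unit_vec v'.
  rewrite /unit_vec (bigD1 k0) //= big1 /v' ?eqxx ?expr1n ?addr0 // => k /negbTE ->.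
  by rewrite expr0n.
have dv : dot v' w = w k0.
  rewrite /dot (bigD1 k0) //= big1 /v' ?eqxx ?mul1r ?addr0 // => k /negbTE ->.
  by rewrite mul0r.
have hv' : dot v' w ^+ 2 < 1 by rewrite dv.
have [e [ue o _]] := gs uw uv' hv'.
exists e, c, 0; split => //.
  have : 1 - c ^+ 2 = 0 by rewrite -Hr big1 // => k _; rewrite r0 expr0n.
  rewrite expr0n /=; lra.
by move=> k; move: (r0 k); rewrite /r mul0r addr0 => /eqP; rewrite subr_eq0 => /eqP.
Qed.

Lemma ftm_ext (n d : nat) (T : tensor R n d) (x y : 'I_d -> 'I_n -> R) :
  (forall j k, x j k = y j k) -> ftm T x = ftm T y.
Proof.
move=> h; rewrite /ftm; apply: eq_bigr => i _; congr (_ * _).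
by apply: eq_bigr => j _; rewrite h.
Qed.

Lemma merge (n d : nat) (T : tensor R n d) :
  (forall d', (2 <= d' <= d)%N -> forall T' : tensor R 2 d',
     symmetric_tensor T' -> has_sym_best_rank_one T') ->
  (2 <= n)%N -> symmetric_tensor T ->
  forall x : 'I_d -> 'I_n -> R, (forall j, unit_vec (x j)) ->
  forall m, (m < d)%N -> exists w, unit_vec w /\
    ftm T x ^+ 2 <= ftm T (fun j => if (j < m.+1)%N then w else x j) ^+ 2.
Proof.
move=> Hyp n2 sT x ux; elim=> [|m IH] hm.
  exists (x (Ordinal hm)); split => //.
  rewrite (@ftm_ext _ _ T (fun j => if (j < 1)%N then x (Ordinal hm) else x j) x) //.
  move=> j k; case: ifP => // hj; congr (x _ _); apply: val_inj => /=.
  by move: hj; rewrite ltnS leqn0 => /eqP.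
have [w [uw hw]] := IH (ltnW hm).
set v := x (Ordinal hm).
have [e [a [b [ue o ab hv]]]] := decomp n2 uw (ux (Ordinal hm)).
pose E : 'I_2 -> 'I_n -> R := fun a0 => if (a0 : nat) == 0%N then w else e.
have le : (m.+2 <= d)%N by [].
have d2 : (2 <= m.+2 <= d)%N by rewrite le.
have [b0 [y [uy hb]]] := Hyp _ d2 _ (Tr_sym le E x sT).
have hmax := best_max (conj uy hb).
pose z1 : 'I_2 -> R := fun a0 => if (a0 : nat) == 0%N then 1 else 0.
pose z2 : 'I_2 -> R := fun a0 => if (a0 : nat) == 0%N then a else b.
have uz1 : unit_vec z1 by rewrite /unit_vec sum2 /z1 /=; lra.
have uz2 : unit_vec z2 by rewrite /unit_vec sum2 /z2 /=.
pose Z : 'I_m.+2 -> 'I_2 -> R := fun j => if (j < m.+1)%N then z1 else z2.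
have uZ : forall j, unit_vec (Z j) by move=> j; rewrite /Z; case: ifP.
have H := hmax Z uZ.
rewrite !(ftm_restr le) in H.
have uy0 : unit_vec y := uy ord0.
exists (phi E y); split.
  by apply: phi_unit => //.
have HE : ftm T (fun j => if (j < m.+2)%N then phi E (Z (inord j)) else x j) =
          ftm T (fun j => if (j < m.+1)%N then w else x j).
  apply: ftm_ext => j k.
  case: (ltnP j m.+1) => h1.
    have h1' : (j < m.+2)%N by apply: (ltn_trans h1).
    rewrite h1' /Z inordK ?h1 //.
    by rewrite /phi sum2 /z1 /E /=; ring.
  case: (ltnP j m.+2) => h2 //.
  have jm : j = Ordinal hm by apply: val_inj => /=; apply/eqP; rewrite eqn_leq h1 -ltnS h2.
  rewrite /Z inordK // ltnNge h1 /= jm hv /phi sum2 /z2 /E /=; ring.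
rewrite HE in H; apply: (le_trans hw); exact: H.
Qed.


Lemma cont_sum (T : topologicalType) (I : Type) (r : seq I) (P : pred I) (F : I -> T -> R) :
  (forall i, continuous (F i)) -> continuous (fun v => \sum_(i <- r | P i) F i v).
Proof.
move=> cF; elim: r => [|a r IH].
  by under eq_fun do rewrite big_nil; exact: cst_continuous.
under eq_fun do rewrite big_cons.
case: (P a).
  by move=> x; apply: continuousD; [exact: cF | exact: IH].
exact: IH.
Qed.

Lemma cont_prod (T : topologicalType) (I : Type) (r : seq I) (P : pred I) (F : I -> T -> R) :
  (forall i, continuous (F i)) -> continuous (fun v => \prod_(i <- r | P i) F i v).
Proof.
move=> cF; elim: r => [|a r IH].
  by under eq_fun do rewrite big_nil; exact: cst_continuous.
under eq_fun do rewrite big_cons.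
case: (P a).
  by move=> x; apply: continuousM; [exact: cF | exact: IH].
exact: IH.
Qed.

Lemma exists_max (n d : nat) (T : tensor R n d) : (0 < n)%N ->
  exists u, unit_vec u /\ forall w, unit_vec w ->
    ftm T (fun _ => w) ^+ 2 <= ftm T (fun _ => u) ^+ 2.
Proof.
move=> n0.
pose g (v : 'rV[R]_n) := ftm T (fun _ k => v ord0 k) ^+ 2.
pose sq (v : 'rV[R]_n) := \sum_(k < n) v ord0 k ^+ 2.
pose A := [set v : 'rV[R]_n | sq v = 1].
have cf : continuous (fun v : 'rV[R]_n => ftm T (fun _ k => v ord0 k)).
  rewrite /ftm; apply: cont_sum => i x; apply: continuousM.
    exact: cst_continuous.
  by apply: cont_prod => j; exact: coord_continuous.
have cg : continuous g.
  by move=> x; rewrite /g; under eq_fun do rewrite expr2; apply: continuousM; exact: cf.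
have csq : continuous sq.
  apply: cont_sum => k x; under eq_fun do rewrite expr2.
  by apply: continuousM; exact: coord_continuous.
have clA : closed A.
  have := (continuous_closedP sq).1 csq [set x : R | x = 1] (closed_eq (y:=1)).
  by [].
have cpA : compact A.
  apply: (@subclosed_compact _ _ [set v : 'rV[R]_n | forall i, `[(-1 : R), 1]%classic (v ord0 i)]) => //.
    exact: (@rV_compact _ n (fun _ => `[(-1 : R), 1]%classic) (fun _ => @segment_compact R _ _)).
  move=> v; rewrite /A /sq /= => hv i; rewrite in_itv /=.
  have : v ord0 i ^+ 2 <= 1.
    rewrite -hv (bigD1 i) //= lerDl; apply: sumr_ge0 => k _; exact: sqr_ge0.
  move=> h; apply/andP; split; nra.
have A0 : A !=set0.
  exists (\row_k ((k == Ordinal n0)%:R : R)); rewrite /A /sq /=.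
  rewrite (bigD1 (Ordinal n0)) //= big1 ?mxE ?eqxx ?expr1n ?addr0 // => k hk.
  by rewrite mxE (negbTE hk) expr0n.
have cgA : {within A, continuous g} by apply: continuous_subspaceT.
have [c cA hc] := EVT_max_rV A0 cpA cgA.
exists (fun k => c ord0 k); split.
  by move: cA; rewrite inE.
move=> w uw.
have := hc (\row_k w k).
rewrite /g.
have -> : (fun _ : 'I_d => fun k => (\row_k w k) ord0 k) = (fun _ k => w k).
  by apply: funext => j; apply: funext => k; rewrite mxE.
apply; rewrite inE /A /sq /=.
by under eq_bigr do rewrite mxE.
Qed.

End Alg.

Theorem lemma3p7 (R : realType) (k : nat) (hk : (2 <= k)%N) :
  (forall d : nat, (2 <= d <= k)%N ->
     forall T : tensor R 2 d, symmetric_tensor T -> has_sym_best_rank_one T) ->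
  forall n d : nat, (3 <= n)%N -> (2 <= d <= k)%N ->
  forall T : tensor R n d, symmetric_tensor T -> has_sym_best_rank_one T.
Proof.
move=> Hyp n d n3 /andP[d2 dk] T sT.
have n0 : (0 < n)%N by apply: leq_trans n3.
have n2 : (2 <= n)%N by apply: leq_trans n3.
have [u [uu hu]] := exists_max T n0.
apply: (max_best uu) => x ux.
have Hyp' : forall d', (2 <= d' <= d)%N -> forall T' : tensor R 2 d',
     symmetric_tensor T' -> has_sym_best_rank_one T'.
  move=> d' /andP[h1 h2]; apply: Hyp; rewrite h1 /=; exact: leq_trans h2 dk.
have dd : (d.-1 < d)%N by rewrite prednK // (leq_trans _ d2).
have [w [uw hw]] := merge Hyp' n2 sT ux dd.
apply: (le_trans hw).
have -> : ftm T (fun j => if (j < d.-1.+1)%N then w else x j) = ftm T (fun _ => w).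
  apply: ftm_ext => j kk; by rewrite prednK ?ltn_ord // (leq_trans _ d2).
exact: hu.
Qed.
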